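(* Let $q=4$ and $n\geq 2$, and let $c>0$ be a real number such that $k=\frac{3n}{8}(\log(3n)+c)$ is an integer. Then $$\Vert \nu_n^{*k}-\pi_n\Vert_{TV}^2\leq \frac94\left(e^{e^{-c}}-1\right).$$
   Context: For integers $n\geq1$, $q\geq2$, the Hamming scheme $H(n,q)$ is the graph with vertex set $X_n=\{0,1,\dots,q-1\}^n$ in which $x$ and $x'$ are adjacent ($x\sim x'$) iff they differ in exactly one coordinate. The simple random walk has transition probability $p_n(x,x')=\frac{1}{n(q-1)}$ if $x\sim x'$ and $0$ otherwise. Let $p_n^{(k)}$ denote the $k$-step transition probability ($p_n^{(0)}(x,x')=\delta_{x,x'}$), $x^{(0)}=(0,\dots,0)$, and $\nu_n^{*k}(x)=p_n^{(k)}(x^{(0)},x)$. $\pi_n$ is the uniform probability measure on $X_n$. For measures $\mu,\nu$ on $X_n$, $\Vert\mu-\nu\Vert_{TV}=\max_{S\subset X_n}|\mu(S)-\nu(S)|$. *)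

(* Defs.v *)
From mathcomp Require Import all_boot.
From Stdlib Require Import Reals.
Set Implicit Arguments. Unset Strict Implicit. Unset Printing Implicit Defensive.

Definition Xn (n q : nat) : finType := {ffun 'I_n -> 'I_q}.

Definition hadj (n q : nat) (x x' : Xn n q) : bool :=
  #|[set i : 'I_n | x i != x' i]| == 1%N.

Definition pstep (n q : nat) (x x' : Xn n q) : R :=
  if hadj x x' then (1 / (INR n * INR (q - 1)))%R else 0%R.

Fixpoint pkstep (n q k : nat) (x x' : Xn n q) {struct k} : R :=
  match k with
  | O => if x == x' then 1%R else 0%R
  | S k' => \big[Rplus/0%R]_(z : Xn n q) (pkstep k' x z * pstep z x')%R
  end.

(* x^{(0)} = (0,...,0); requires q >= 1 to make sense, we write q = q'.+1 *)
Definition x0 (n q' : nat) : Xn n q'.+1 := [ffun _ => ord0].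

Definition nuk (n q' k : nat) (x : Xn n q'.+1) : R := pkstep k (x0 n q') x.

Definition unif (n q : nat) (x : Xn n q) : R := (1 / INR (q ^ n))%R.

Definition tvdist (T : finType) (mu nu : T -> R) : R :=
  \big[Rmax/0%R]_(S : {set T})
     Rabs (\big[Rplus/0%R]_(x in S) mu x - \big[Rplus/0%R]_(x in S) nu x)%R.

(* Main.v *)
From HB Require Import structures.
Require Import Defs.
From mathcomp Require Import all_boot.
From Stdlib Require Import Reals Lra Lia.
Set Implicit Arguments. Unset Strict Implicit. Unset Printing Implicit Defensive.
Set Warnings "-redundant-canonical-projection -notation-overridden".
Local Open Scope R_scope.
Lemma RplusA' : associative Rplus. Proof. by move=> a b c; rewrite Rplus_assoc. Qed.
Lemma RmultA' : associative Rmult. Proof. by move=> a b c; rewrite Rmult_assoc. Qed.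
HB.instance Definition _ := Monoid.isComLaw.Build R 0%R Rplus RplusA' Rplus_comm Rplus_0_l.
HB.instance Definition _ := Monoid.isComLaw.Build R 1%R Rmult RmultA' Rmult_comm Rmult_1_l.
HB.instance Definition _ := Monoid.isMulLaw.Build R 0%R Rmult Rmult_0_l Rmult_0_r.
HB.instance Definition _ := Monoid.isAddLaw.Build R Rmult Rplus Rmult_plus_distr_r Rmult_plus_distr_l.

Definition wb (a b : 'I_4) : bool := (odd a && odd b) (+) (odd a./2 && odd b./2).
Definition w (a b : 'I_4) : R := if wb a b then -1 else 1.

Lemma w_sym a b : w a b = w b a.
Proof. by rewrite /w /wb andbC (andbC (odd a./2)). Qed.
Lemma w_a0 a : w a ord0 = 1.
Proof. by rewrite /w /wb /= !andbF. Qed.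
Lemma w_0b b : w ord0 b = 1.
Proof. by rewrite w_sym w_a0. Qed.
Lemma w_sq a b : w a b * w a b = 1.
Proof. rewrite /w; case: (wb a b); lra. Qed.

Lemma w_orth (b b' : 'I_4) :
  \big[Rplus/0]_(a : 'I_4) (w a b * w a b') = if b == b' then 4 else 0.
Proof.
rewrite !big_ord_recl big_ord0 /w /wb /=.
case: b => [[|[|[|[|b]]]] Hb] //; case: b' => [[|[|[|[|b']]]] Hb'] //=; lra.
Qed.

Lemma w_nb (a b0 : 'I_4) :
  \big[Rplus/0]_(b : 'I_4) (if b != b0 then w a b * w a b0 else 0) =
  if a == ord0 then 3 else -1.
Proof.
rewrite !big_ord_recl big_ord0 /w /wb /=.
case: a => [[|[|[|[|a]]]] Ha] //; case: b0 => [[|[|[|[|b]]]] Hb] //=; lra.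
Qed.
Lemma sum_ifeq (T : finType) (y : T) (F : T -> R) :
  \big[Rplus/0]_(x : T) (if x == y then F x else 0) = F y.
Proof.
rewrite (bigD1 y) //= eqxx big1 ?Rplus_0_r // => x /negPf ->; done.
Qed.

Lemma sum_const (T : finType) (c : R) :
  \big[Rplus/0]_(x : T) c = INR #|T| * c.
Proof.
rewrite big_const; elim: #|T| => [|m IH]; first by rewrite /=; lra.
rewrite iterS IH S_INR; lra.
Qed.

Lemma prod_const_ord n (c : R) : \big[Rmult/1]_(i : 'I_n) c = c ^ n.
Proof.
rewrite big_const card_ord; elim: n => [|m IH] //=; by rewrite IH.
Qed.

Lemma sum_le (T : finType) (F G : T -> R) :
  (forall x, F x <= G x) -> \big[Rplus/0]_x F x <= \big[Rplus/0]_x G x.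
Proof.
move=> H; apply: (big_ind2 (fun a b => a <= b)) => //; first lra.
move=> *; lra.
Qed.

Lemma sum_ge0 (T : finType) (F : T -> R) :
  (forall x, 0 <= F x) -> 0 <= \big[Rplus/0]_x F x.
Proof. move=> H; apply: (big_ind (fun a => 0 <= a)) => //; [lra|move=> *; lra]. Qed.

Lemma exp_sum (T : finType) (F : T -> R) :
  exp (\big[Rplus/0]_x F x) = \big[Rmult/1]_x exp (F x).
Proof. by rewrite (big_morph exp exp_plus exp_0). Qed.

Lemma sum_mulr (T : finType) (a : R) (F : T -> R) :
  \big[Rplus/0]_x (a * F x) = a * \big[Rplus/0]_x F x.
Proof. by rewrite big_distrr. Qed.

Lemma sum_plus (T : finType) (F G : T -> R) :
  \big[Rplus/0]_x (F x + G x) = \big[Rplus/0]_x F x + \big[Rplus/0]_x G x.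
Proof. by rewrite big_split. Qed.

Lemma cauchy_schwarz (T : finType) (a b : T -> R) :
  0 < \big[Rplus/0]_x (a x * a x) ->
  (\big[Rplus/0]_x (a x * b x)) ^ 2 <=
  (\big[Rplus/0]_x (a x * a x)) * (\big[Rplus/0]_x (b x * b x)).
Proof.
set A := \big[Rplus/0]_x (a x * a x); set P := \big[Rplus/0]_x (a x * b x);
set C := \big[Rplus/0]_x (b x * b x) => HA.
have H t : 0 <= t * t * A + (2 * t) * P + C.
  have -> : t * t * A + (2 * t) * P + C =
    \big[Rplus/0]_x ((t * a x + b x) * (t * a x + b x)).
    rewrite /A /P /C -!sum_mulr -!sum_plus; apply: eq_bigr => x _; ring.
  by apply: sum_ge0 => x; apply: Rle_0_sqr.
have := H (- P / A).
have -> : - P / A * (- P / A) * A + 2 * (- P / A) * P + C = C - P * P / A.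
  field; lra.
move=> H2.
have : P * P / A <= C by lra.
move=> H3; have : P * P <= C * A.
  have -> : P * P = (P * P / A) * A by field; lra.
  apply: Rmult_le_compat_r; lra.
simpl; nra.
Qed.
Definition chi n (s x : Xn n 4) : R := \big[Rmult/1]_i w (s i) (x i).

Lemma chi_sym n (s x : Xn n 4) : chi s x = chi x s.
Proof. by apply: eq_bigr => i _; rewrite w_sym. Qed.

Lemma chi_x0 n (s : Xn n 4) : chi s (x0 n 3) = 1.
Proof. by rewrite /chi big1 // => i _; rewrite /x0 ffunE w_a0. Qed.

Lemma chi_x0' n (s : Xn n 4) : chi (x0 n 3) s = 1.
Proof. by rewrite chi_sym chi_x0. Qed.

Lemma chi_orth n (x y : Xn n 4) :
  \big[Rplus/0]_(s : Xn n 4) (chi s x * chi s y) = if x == y then 4 ^ n else 0.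
Proof.
transitivity (\big[Rplus/0]_(s : {ffun 'I_n -> 'I_4})
   \big[Rmult/1]_i (w (s i) (x i) * w (s i) (y i))).
  by apply: eq_bigr => s _; rewrite /chi big_split.
rewrite -(bigA_distr_bigA (fun i a => w a (x i) * w a (y i))).
under eq_bigr do rewrite w_orth.
case: eqP => [<-|Hne].
  by under eq_bigr do rewrite eqxx; rewrite prod_const_ord.
have [i Hi] : exists i, x i != y i.
  apply/existsP; rewrite -negb_forall; apply/negP => /forallP H.
  by apply: Hne; apply/ffunP => j; apply/eqP.
by rewrite (bigD1 i) //= (negPf Hi) Rmult_0_l.
Qed.
Definition upd n (z : Xn n 4) (i : 'I_n) (b : 'I_4) : Xn n 4 :=
  [ffun j => if j == i then b else z j].

Lemma chi_upd n (s z : Xn n 4) i b :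
  chi s (upd z i b) = w (s i) b * w (s i) (z i) * chi s z.
Proof.
rewrite /chi (bigD1 i) //= [in RHS](bigD1 i) //= ffunE eqxx.
have -> : \big[Rmult/1]_(j | j != i) w (s j) (upd z i b j) =
          \big[Rmult/1]_(j | j != i) w (s j) (z j).
  by apply: eq_bigr => j /negPf Hj; rewrite ffunE Hj.
have H := w_sq (s i) (z i).
by rewrite -Rmult_assoc (Rmult_assoc (w (s i) b)) H Rmult_1_r.
Qed.

Lemma cond_set1 n (z x : Xn n 4) (i : 'I_n) :
  (x == upd z i (x i)) && (x i != z i) = ([set j | z j != x j] == [set i]).
Proof.
apply/idP/idP.
  move=> /andP [/eqP Hx Hi]; apply/eqP/setP => j; rewrite !inE.
  case: (eqVneq j i) => [->|Hj]; first by rewrite eq_sym Hi.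
  by rewrite Hx ffunE (negPf Hj) eqxx.
move=> /eqP HD; have Hj j : (z j != x j) = (j == i).
  by move: HD => /setP /(_ j); rewrite !inE.
apply/andP; split; last by rewrite eq_sym Hj.
apply/eqP/ffunP => j; rewrite ffunE; case: (eqVneq j i) => [->|Hji] //.
by apply/eqP; rewrite eq_sym; apply/negPn; rewrite Hj (negPf Hji).
Qed.

Lemma nb_sum n (z : Xn n 4) (g : Xn n 4 -> R) :
  \big[Rplus/0]_(x : Xn n 4) (if hadj z x then g x else 0) =
  \big[Rplus/0]_(i : 'I_n) \big[Rplus/0]_(b : 'I_4)
     (if b != z i then g (upd z i b) else 0).
Proof.
transitivity (\big[Rplus/0]_(i : 'I_n) \big[Rplus/0]_(b : 'I_4)
   \big[Rplus/0]_(x : Xn n 4)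
     (if x == upd z i b then (if b != z i then g x else 0) else 0)); last first.
  by apply: eq_bigr => i _; apply: eq_bigr => b _; rewrite sum_ifeq.
under [in RHS]eq_bigr do rewrite exchange_big.
rewrite exchange_big; apply: eq_bigr => x _.
transitivity (\big[Rplus/0]_(i : 'I_n)
   (if [set j | z j != x j] == [set i] then g x else 0)); last first.
  apply: eq_bigr => i _; rewrite -cond_set1.
  rewrite (bigD1 (x i)) //= big1 ?Rplus_0_r; last first.
    move=> b Hb; case: eqP => // Hx; exfalso; move: Hb; rewrite Hx ffunE eqxx.
    by rewrite eqxx.
  by case: (x == _); case: (x i != z i).
rewrite /hadj; case: eqP => Hc.
  have [i0 Hi0] := cards1P (introT eqP Hc); rewrite Hi0 (bigD1 i0) //= eqxx big1 ?Rplus_0_r //.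
  by move=> i Hi; case: eqP => // /set1_inj E; move: Hi; rewrite E eqxx.
rewrite big1 // => i _; case: eqP => // HD; exfalso; apply: Hc; by rewrite HD cards1.
Qed.
Definition lam n (s : Xn n 4) : R :=
  (\big[Rplus/0]_i (if s i == ord0 then 3 else -1)) / (3 * INR n).

Lemma eigen n (s z : Xn n 4) : (leq 1 n) ->
  \big[Rplus/0]_(x : Xn n 4) (pstep z x * chi s x) = lam s * chi s z.
Proof.
move=> Hn.
have HnR : 0 < INR n by apply: lt_0_INR; apply/ltP.
set c := 1 / (INR n * INR (4 - 1)).
transitivity (\big[Rplus/0]_(x : Xn n 4) (if hadj z x then c * chi s x else 0)).
  by apply: eq_bigr => x _; rewrite /pstep; case: hadj; rewrite ?Rmult_0_l.
rewrite nb_sum.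
transitivity (\big[Rplus/0]_(i : 'I_n) \big[Rplus/0]_(b : 'I_4)
   (c * chi s z * (if b != z i then w (s i) b * w (s i) (z i) else 0))).
  apply: eq_bigr => i _; apply: eq_bigr => b _; rewrite chi_upd.
  by case: (b != z i); [ring | rewrite Rmult_0_r].
under eq_bigr do rewrite sum_mulr w_nb.
rewrite sum_mulr /lam /c.
have -> : INR (4 - 1) = 3 by rewrite /=; lra.
set S := \big[Rplus/0]_(i : 'I_n) _.
field; lra.
Qed.

Lemma nu_chi n k (s : Xn n 4) : (leq 1 n) ->
  \big[Rplus/0]_(x : Xn n 4) (@nuk n 3 k x * chi s x) = lam s ^ k.
Proof.
move=> Hn; elim: k => [|k IH].
  rewrite /nuk /=.
  transitivity (\big[Rplus/0]_(x : Xn n 4) (if x == x0 n 3 then chi s x else 0)).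
    apply: eq_bigr => x _; rewrite eq_sym; case: (_ == _); ring.
  by rewrite sum_ifeq chi_x0.
rewrite /nuk /=.
transitivity (\big[Rplus/0]_(x : Xn n 4) \big[Rplus/0]_(z : Xn n 4)
   (pkstep k (x0 n 3) z * (pstep z x * chi s x))).
  apply: eq_bigr => x _; rewrite big_distrl; apply: eq_bigr => z _ /=; ring.
rewrite exchange_big.
transitivity (\big[Rplus/0]_(z : Xn n 4) (lam s * (pkstep k (x0 n 3) z * chi s z))).
  apply: eq_bigr => z _; rewrite sum_mulr eigen //; ring.
by rewrite sum_mulr -IH /nuk.
Qed.
Lemma INR_expn a b : INR (expn a b) = INR a ^ b.
Proof.
elim: b => [|b IH]; first by rewrite expn0.
by rewrite expnS -multE mult_INR IH.
Qed.

Lemma card_X n : INR #|Xn n 4| = 4 ^ n.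
Proof. by rewrite /Xn card_ffun !card_ord INR_expn; congr (_ ^ _); rewrite /=; lra. Qed.

Lemma sum_minus (T : finType) (F G : T -> R) :
  \big[Rplus/0]_x (F x - G x) = \big[Rplus/0]_x F x - \big[Rplus/0]_x G x.
Proof.
have -> : \big[Rplus/0]_x (F x - G x) = \big[Rplus/0]_x (F x + (-1) * G x).
  by apply: eq_bigr => x _; ring.
rewrite sum_plus sum_mulr; ring.
Qed.

Lemma lam_x0 n : (leq 1 n) -> lam (x0 n 3) = 1.
Proof.
move=> Hn; have HnR : 0 < INR n by apply: lt_0_INR; apply/ltP.
rewrite /lam (eq_bigr (fun _ => 3)); last by move=> i _; rewrite /x0 ffunE eqxx.
rewrite sum_const card_ord; field; lra.
Qed.

Section Spectral.
Variables (n k : nat).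
Hypothesis Hn : leq 1 n.
Definition dd (x : Xn n 4) : R := @nuk n 3 k x - @unif n 4 x.
Definition chat (s : Xn n 4) : R := \big[Rplus/0]_x (dd x * chi s x).

Lemma sum_chi (s : Xn n 4) :
  \big[Rplus/0]_x chi s x = if s == x0 n 3 then 4 ^ n else 0.
Proof.
rewrite -chi_orth; apply: eq_bigr => x _; by rewrite chi_x0 Rmult_1_r chi_sym.
Qed.

Lemma chatE s : chat s = lam s ^ k - (if s == x0 n 3 then 1 else 0).
Proof.
rewrite /chat /dd.
have -> : \big[Rplus/0]_x ((@nuk n 3 k x - @unif n 4 x) * chi s x) =
  \big[Rplus/0]_x (@nuk n 3 k x * chi s x) - \big[Rplus/0]_x (/ 4 ^ n * chi s x).
  rewrite -sum_minus; apply: eq_bigr => x _; rewrite /unif pow_INR.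
  have -> : INR 4 = 4 by rewrite /=; lra.
  field; apply: pow_nonzero; lra.
rewrite nu_chi // -big_distrr /= sum_chi.
case: (_ == _); last by ring.
field; apply: pow_nonzero; lra.
Qed.

Lemma inversion x : \big[Rplus/0]_s (chat s * chi s x) = 4 ^ n * dd x.
Proof.
rewrite /chat.
transitivity (\big[Rplus/0]_s \big[Rplus/0]_y (dd y * (chi s y * chi s x))).
  by apply: eq_bigr => s _; rewrite big_distrl; apply: eq_bigr => y _ /=; ring.
rewrite exchange_big.
transitivity (\big[Rplus/0]_y (if y == x then 4 ^ n * dd y else 0)).
  apply: eq_bigr => y _; rewrite -big_distrr /= chi_orth; case: (_ == _); ring.
by rewrite sum_ifeq.
Qed.

Lemma parseval : \big[Rplus/0]_x (dd x * dd x) =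
  / 4 ^ n * \big[Rplus/0]_s (chat s * chat s).
Proof.
have H4 : 4 ^ n <> 0 by apply: pow_nonzero; lra.
transitivity (\big[Rplus/0]_x (/ 4 ^ n * \big[Rplus/0]_s (chat s * (dd x * chi s x)))).
  apply: eq_bigr => x _.
  have -> : \big[Rplus/0]_s (chat s * (dd x * chi s x)) = dd x * (4 ^ n * dd x).
    rewrite -inversion big_distrr /=; apply: eq_bigr => s _; ring.
  field; done.
rewrite -big_distrr /= exchange_big; congr (_ * _); apply: eq_bigr => s _.
by rewrite -big_distrr.
Qed.

Lemma sum_dd : \big[Rplus/0]_x dd x = 0.
Proof.
have := chatE (x0 n 3); rewrite eqxx lam_x0 // pow1 /chat.
under eq_bigr do rewrite chi_x0' Rmult_1_r.
move=> ->; ring.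
Qed.

Lemma set_bound (S : {set Xn n 4}) :
  (\big[Rplus/0]_(x in S) @nuk n 3 k x - \big[Rplus/0]_(x in S) @unif n 4 x) ^ 2
  <= / 4 * \big[Rplus/0]_s (chat s * chat s).
Proof.
have H4 : 0 < 4 ^ n by apply: pow_lt; lra.
set h := fun x : Xn n 4 => (if x \in S then 1 else 0) - / 2.
have -> : \big[Rplus/0]_(x in S) @nuk n 3 k x - \big[Rplus/0]_(x in S) @unif n 4 x
    = \big[Rplus/0]_x (h x * dd x).
  have -> : \big[Rplus/0]_x (h x * dd x) =
     \big[Rplus/0]_x ((if x \in S then @nuk n 3 k x else 0) -
                       (if x \in S then @unif n 4 x else 0)) - / 2 * \big[Rplus/0]_x dd x.
    rewrite big_distrr /= -sum_minus; apply: eq_bigr => x _; rewrite /h /dd.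
    case: (x \in S); ring.
  by rewrite sum_dd Rmult_0_r Rminus_0_r sum_minus -!big_mkcond.
have Hh : \big[Rplus/0]_x (h x * h x) = 4 ^ n * / 4.
  rewrite (eq_bigr (fun _ => / 4)); last first.
    by move=> x _; rewrite /h; case: (x \in S); field.
  by rewrite sum_const card_X.
have HA : 0 < \big[Rplus/0]_x (h x * h x).
  by rewrite Hh; apply: Rmult_lt_0_compat; lra.
apply: Rle_trans (cauchy_schwarz dd HA) _.
rewrite Hh parseval.
right; field; lra.
Qed.
End Spectral.
Lemma exp_le' x y : x <= y -> exp x <= exp y.
Proof. case/Rle_lt_or_eq_dec => [H|->]; [left; exact: exp_increasing | right; done]. Qed.

Lemma ln_le' x y : 0 < x -> x <= y -> ln x <= ln y.
Proof. move=> Hx; case/Rle_lt_or_eq_dec => [H|->]; [left; exact: ln_increasing | right; done]. Qed.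

Lemma exp_pow_nat u m : exp u ^ m = exp (INR m * u).
Proof.
elim: m => [|m IH]; first by rewrite /= Rmult_0_l exp_0.
rewrite S_INR [exp u ^ m.+1]/= IH -exp_plus; congr exp; ring.
Qed.

Lemma ln3_ge1 : 1 <= ln 3.
Proof. rewrite -{1}(ln_exp 1); apply: ln_le'; [exact: exp_pos | exact: exp_le_3]. Qed.

Lemma ln2_gt0 : 0 < ln 2.
Proof. rewrite -ln_1; apply: ln_increasing; lra. Qed.

Lemma key_ln n : (2 <= n)%coq_nat ->
  2 * INR n * ln 2 <= 3 * ln 2 + 3 * INR n / 4 * ln (3 * INR n).
Proof.
move=> Hn.
have H3 := ln3_ge1; have H2 := ln2_gt0.
have Hln4 : ln 6 = ln 2 + ln 3.
  rewrite -ln_mult; try lra; congr ln; lra.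
have [->|Hn3] : n = 2%nat \/ (3 <= n)%coq_nat by lia.
  have -> : 3 * INR 2 = 6 by rewrite /=; lra.
  rewrite Hln4 /=; nra.
have HnR : 3 <= INR n by have := le_INR _ _ Hn3; simpl; lra.
have HL : 2 * ln 3 <= ln (3 * INR n).
  have -> : 2 * ln 3 = ln 9.
    rewrite (_ : 2 * ln 3 = ln 3 + ln 3); last ring.
    rewrite -ln_mult; try lra; congr ln; lra.
  apply: ln_le'; lra.
have H68 : 8 * ln 2 <= 6 * ln 3.
  have -> : 8 * ln 2 = ln (2 ^ 8) by rewrite ln_pow ?(INR_IZR_INZ 8); [rewrite /=; ring|lra].
  have -> : 6 * ln 3 = ln (3 ^ 6) by rewrite ln_pow; [rewrite /=; ring|lra].
  apply: ln_le'; rewrite /=; lra.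
nra.
Qed.

Lemma numeric n k c : (2 <= n)%coq_nat -> 0 < c ->
  INR k = 3 * INR n / 8 * (ln (3 * INR n) + c) ->
  (1 + 3 * exp (- (ln (3 * INR n) + c))) ^ n - 1 + 4 ^ n * (/ 9) ^ k
    <= 9 * (exp (exp (- c)) - 1).
Proof.
move=> Hn Hc Hk.
have HnR : 2 <= INR n by have := le_INR _ _ Hn; simpl; lra.
have H3 := ln3_ge1; have H2 := ln2_gt0.
have Hy : 3 * exp (- (ln (3 * INR n) + c)) = exp (- c) / INR n.
  rewrite Ropp_plus_distr exp_plus exp_Ropp exp_ln; [field; lra | lra].
have P1 : (1 + 3 * exp (- (ln (3 * INR n) + c))) ^ n <= exp (exp (- c)).
  rewrite Hy.
  have E1 : 1 + exp (- c) / INR n <= exp (exp (- c) / INR n) by apply: exp_ineq1_le.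
  have Hx0 : 0 <= 1 + exp (- c) / INR n.
    have := exp_pos (- c); move=> ?; apply: Rplus_le_le_0_compat; first lra.
    apply: Rmult_le_pos; [lra | left; apply: Rinv_0_lt_compat; lra].
  apply: Rle_trans (pow_incr _ _ n (conj Hx0 E1)) _.
  rewrite exp_pow_nat; right; congr exp; field; lra.
have P2 : 4 ^ n * (/ 9) ^ k <= 8 * exp (- c).
  have -> : 4 ^ n = exp (INR n * (2 * ln 2)).
    have -> : 2 * ln 2 = ln 4.
      rewrite (_ : 2 * ln 2 = ln 2 + ln 2); last ring.
      rewrite -ln_mult; try lra; congr ln; lra.
    by rewrite -ln_pow ?exp_ln //; [apply: pow_lt|]; lra.
  have -> : (/ 9) ^ k = exp (INR k * (- (2 * ln 3))).
    have -> : - (2 * ln 3) = ln (/ 9).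
      rewrite ln_Rinv; last lra.
      rewrite (_ : 2 * ln 3 = ln 3 + ln 3); last ring.
      rewrite -ln_mult; try lra; congr (- ln _); lra.
    rewrite -ln_pow ?exp_ln //; [apply: pow_lt|]; apply: Rinv_0_lt_compat; lra.
  have -> : 8 = exp (3 * ln 2).
    rewrite (_ : 3 * ln 2 = INR 3 * ln 2); last by simpl; ring.
    rewrite -ln_pow ?exp_ln; [simpl; lra | simpl; lra | lra].
  rewrite -!exp_plus; apply: exp_le'.
  have K := key_ln Hn.
  have Hk0 : 0 <= INR k by apply: pos_INR.
  nra.
have P3 : exp (- c) <= exp (exp (- c)) - 1 by have := exp_ineq1_le (exp (- c)); lra.
lra.
Qed.
Definition msupp n (s : Xn n 4) : R :=
  \big[Rplus/0]_i (if s i == ord0 then 0 else 1).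

Lemma msupp_bounds n (s : Xn n 4) : 0 <= msupp s <= INR n.
Proof.
split; first by apply: sum_ge0 => i; case: (_ == _); lra.
have -> : INR n = \big[Rplus/0]_(i : 'I_n) 1 by rewrite sum_const card_ord Rmult_1_r.
by apply: sum_le => i; case: (_ == _); lra.
Qed.

Lemma lamE n (s : Xn n 4) : leq 1 n -> lam s = 1 - 4 * msupp s / (3 * INR n).
Proof.
move=> Hn; have HnR : 0 < INR n by apply: lt_0_INR; apply/ltP.
rewrite /lam.
have -> : \big[Rplus/0]_i (if s i == ord0 then 3 else -1) = INR n * 3 + (-4) * msupp s.
  transitivity (\big[Rplus/0]_(i : 'I_n) (3 + (-4) * (if s i == ord0 then 0 else 1))).
    by apply: eq_bigr => i _; case: (_ == _); ring.
  by rewrite sum_plus sum_const card_ord /msupp big_distrr.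
field; lra.
Qed.

Definition Ey n (y : R) (s : Xn n 4) : R :=
  \big[Rmult/1]_i (if s i == ord0 then 1 else y).

Lemma EyE n a (s : Xn n 4) : Ey (exp (- a)) s = exp (- a * msupp s).
Proof.
rewrite /msupp big_distrr /= exp_sum; apply: eq_bigr => i _.
case: (_ == _); [by rewrite Rmult_0_r exp_0 | by rewrite Rmult_1_r].
Qed.

Lemma sum_Ey n y : \big[Rplus/0]_(s : Xn n 4) Ey y s = (1 + 3 * y) ^ n.
Proof.
transitivity (\big[Rplus/0]_(s : {ffun 'I_n -> 'I_4})
   \big[Rmult/1]_i (if s i == ord0 then 1 else y)).
  by [].
rewrite -(bigA_distr_bigA (fun (_ : 'I_n) (b : 'I_4) => if b == ord0 then 1 else y)).
rewrite -prod_const_ord; apply: eq_bigr => i _.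
rewrite !big_ord_recl big_ord0 /=; ring.
Qed.

Lemma chat_sum_bound n k (a : R) : leq 1 n ->
  a = INR k * 8 / (3 * INR n) ->
  \big[Rplus/0]_(s : Xn n 4) (chat k s * chat k s) <=
  (1 + 3 * exp (- a)) ^ n - 1 + 4 ^ n * (/ 9) ^ k.
Proof.
move=> Hn Ha; have HnR : 0 < INR n by apply: lt_0_INR; apply/ltP.
have H9 : 0 < (/ 9) ^ k by apply: pow_lt; lra.
set c9 := (/ 9) ^ k in H9 *.
have Hs s : chat k s * chat k s <=
    Ey (exp (- a)) s - (if s == x0 n 3 then 1 else 0) + c9.
  rewrite chatE //; case: eqP => [->|Hne].
    rewrite lam_x0 // pow1 /Ey (eq_bigr (fun _ => 1)); last by move=> i _; rewrite ffunE eqxx.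
    rewrite prod_const_ord pow1; lra.
  rewrite Rminus_0_r Rminus_0_r EyE lamE //.
  have [Hm0 HmN] := msupp_bounds s.
  set m := msupp s in Hm0 HmN *.
  have HE := exp_pos (- a * m).
  case: (Rle_lt_dec (4 * m) (3 * INR n)) => Hc.
    set u := - (4 * m / (3 * INR n)).
    have Hu : 0 <= 1 + u <= exp u.
      split; last exact: exp_ineq1_le.
      rewrite /u; apply: (Rmult_le_reg_r (3 * INR n)); first lra.
      rewrite Rmult_0_l; field_simplify; lra.
    have -> : 1 - 4 * m / (3 * INR n) = 1 + u by rewrite /u; ring.
    have Hp := pow_incr _ _ k Hu.
    have Hp0 : 0 <= (1 + u) ^ k by apply: pow_le; lra.
    apply: Rle_trans (_ : exp u ^ k * exp u ^ k <= _).
      by apply: Rmult_le_compat.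
    rewrite exp_pow_nat -exp_plus.
    have -> : INR k * u + INR k * u = - a * m.
      by rewrite /u Ha; field; lra.
    lra.
  set L := 1 - 4 * m / (3 * INR n).
  have HL : 0 <= L * L <= / 9.
    split; first by apply: Rle_0_sqr.
    have HL1 : - / 3 <= L.
      rewrite /L; apply: (Rmult_le_reg_r (3 * INR n)); first lra.
      field_simplify; lra.
    have HL2 : L < 0.
      rewrite /L; apply: (Rmult_lt_reg_r (3 * INR n)); first lra.
      field_simplify; lra.
    nra.
  rewrite -Rpow_mult_distr.
  have := pow_incr _ _ k HL; rewrite /c9; lra.
apply: Rle_trans (sum_le Hs) _.
rewrite sum_plus sum_minus sum_Ey sum_const card_X.
rewrite (sum_ifeq (x0 n 3) (fun _ => 1)); right; ring.
Qed.
Lemma main_bound n k c : (2 <= n)%coq_nat -> 0 < c ->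
  INR k = 3 * INR n / 8 * (ln (3 * INR n) + c) ->
  forall S : {set Xn n 4},
  (\big[Rplus/0]_(x in S) @nuk n 3 k x - \big[Rplus/0]_(x in S) @unif n 4 x) ^ 2
  <= 9 / 4 * (exp (exp (- c)) - 1).
Proof.
move=> Hn Hc Hk S.
have Hn1 : leq 1 n by apply/leP; lia.
have HnR : 0 < INR n by apply: lt_0_INR; lia.
apply: Rle_trans (set_bound k Hn1 S) _.
have Ha : ln (3 * INR n) + c = INR k * 8 / (3 * INR n) by rewrite Hk; field; lra.
have := chat_sum_bound Hn1 Ha.
have := numeric Hn Hc Hk.
lra.
Qed.

Local Close Scope R_scope.

Theorem theorem1p2 (n : nat) (c : R) (k : nat) :
  (2 <= n)%N -> (0 < c)%R ->
  INR k = (3 * INR n / 8 * (ln (3 * INR n) + c))%R ->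
  (tvdist (@nuk n 3 k) (@unif n 4) ^ 2 <= 9 / 4 * (exp (exp (- c)) - 1))%R.
Proof.
move=> Hn Hc Hk.
have Hn2 : (2 <= n)%coq_nat by apply/leP.
have HB := main_bound Hn2 Hc Hk.
set B := (9 / 4 * (exp (exp (- c)) - 1))%R in HB *.
have HB0 : (0 <= B)%R.
  have := exp_ineq1_le (exp (- c)); have := exp_pos (- c); rewrite /B; lra.
have Hup : (tvdist (@nuk n 3 k) (@unif n 4) <= sqrt B)%R.
  rewrite /tvdist; apply: (big_ind (fun v => v <= sqrt B)%R).
  - exact: sqrt_pos.
  - by move=> x y Hx Hy; apply: Rmax_lub.
  - move=> S _; rewrite -sqrt_Rsqr_abs; apply: sqrt_le_1_alt.
    have := HB S; rewrite /Rsqr /=; lra.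
have Hlo : (0 <= tvdist (@nuk n 3 k) (@unif n 4))%R.
  rewrite /tvdist; apply: (big_ind (fun v => 0 <= v)%R).
  - lra.
  - by move=> x y Hx _; apply: Rle_trans (Rmax_l x y).
  - by move=> S _; apply: Rabs_pos.
rewrite -(pow2_sqrt B) //; apply: pow_incr; lra.
Qed.
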